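(* Let $L:G\to\mathcal{L}$ be a labeling function on a finite abelian group $G$. If $L$ is $3$-friendly, then $L$ is friendly, i.e. $m$-friendly for every $m\ge 3$.
   Context: Let $G$ be a finite abelian group written additively, $\mathcal{L}$ a finite set, and $L:G\to\mathcal{L}$ any function. For $m\ge3$ let $Z_m=\{(g_1,\dots,g_m)\in G^m: g_1+\cdots+g_{m-1}=g_m\}$, let $\widetilde{L}:Z_m\to\mathcal{L}^m$ be $\widetilde L(g_1,\dots,g_m)=(L(g_1),\dots,L(g_m))$, and let $\pi_i:G^m\to G$ be the $i$-th coordinate projection. $L$ is called $m$-friendly if for every $l=(l_1,\dots,l_m)\in\widetilde{L}(Z_m)$ and every $i=1,\dots,m$ one has $\pi_i(\widetilde{L}^{-1}(l))=L^{-1}(l_i)$. $L$ is friendly if it is $m$-friendly for all $m\ge3$. *)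

(* Defs.v *)
From HB Require Import structures.
From mathcomp Require Import all_boot all_order all_algebra all_fingroup.
Set Implicit Arguments. Unset Strict Implicit. Unset Printing Implicit Defensive.
Import GRing.Theory.
Local Open Scope ring_scope.

(* Z_m = {(g_1..g_m) : g_1 + ... + g_{m-1} = g_m}, as m-tuples (0-indexed). *)
Definition Zm (G : finZmodType) (m : nat) : {set m.-tuple G} :=
  [set g : m.-tuple G |
     (\sum_(i < m | (i < m.-1)%N) tnth g i) == nth 0 g m.-1].

Definition Ltil (G : finZmodType) (Lab : finType) (L : G -> Lab) (m : nat)
  (g : m.-tuple G) : m.-tuple Lab := map_tuple L g.

Definition m_friendly (G : finZmodType) (Lab : finType) (L : G -> Lab) (m : nat)
  : Prop :=
  forall l : m.-tuple Lab, l \in [set Ltil L g | g in Zm G m] ->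
  forall i : 'I_m,
    [set tnth g i | g in [set g in Zm G m | Ltil L g == l]]
    = [set x : G | L x == tnth l i].

Definition friendly (G : finZmodType) (Lab : finType) (L : G -> Lab) : Prop :=
  forall m : nat, (3 <= m)%N -> m_friendly L m.

(* Main.v *)
Require Import Defs.
From mathcomp Require Import all_boot all_order all_algebra all_fingroup.
Import GRing.Theory.
Local Open Scope ring_scope.

Section S.
Variables (G : finZmodType) (Lab : finType) (L : G -> Lab).

Definition Q (n : nat) : Prop :=
  forall f : nat -> G, \sum_(i < n) f i = f n ->
  forall i, (i <= n)%N -> forall x, L x = L (f i) ->
  exists h : nat -> G, [/\ \sum_(j < n) h j = h n,
     (forall j, (j <= n)%N -> L (h j) = L (f j)) & h i = x].

Lemma nth_mkt m (f : nat -> G) k : (k < m)%N ->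
  nth 0 [tuple f (val j) | j < m] k = f k.
Proof.
move=> hk; have -> : k = val (Ordinal hk) by [].
by rewrite -tnth_nth tnth_mktuple.
Qed.

Lemma ZmE n (t : n.+1.-tuple G) :
  (t \in Zm G n.+1) = (\sum_(i < n) nth 0 t i == nth 0 t n).
Proof.
rewrite inE /=; congr (_ == _).
rewrite big_mkcond big_ord_recr /= ltnn addr0.
by apply: eq_bigr => i _; rewrite ltn_ord (tnth_nth 0).
Qed.

Lemma Q2 : m_friendly L 3 -> Q 2.
Proof.
move=> H f hf i hi x hx.
pose g := [tuple f (val j) | j < 3].
have gZ : g \in Zm G 3.
  rewrite ZmE !big_ord_recr big_ord0 /= add0r.
  by rewrite /g !nth_mkt // -hf !big_ord_recr big_ord0 /= add0r.
have lin : Ltil L g \in [set Ltil L g0 | g0 in Zm G 3] by apply: imset_f.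
have := H _ lin (inord i).
have ei : val (@inord 2 i) = i by rewrite /= inordK ?ltnS.
move/setP/(_ x); rewrite inE tnth_map tnth_mktuple ei -hx eqxx.
case/imsetP => g' ; rewrite inE => /andP [g'Z /eqP g'L] ->.
exists (fun j => nth 0 g' j); split.
- by move: g'Z; rewrite ZmE => /eqP.
- move=> j hj.
  have := congr1 (fun t => tnth t (inord j)) g'L.
  by rewrite /= !tnth_map tnth_ord_tuple (tnth_nth 0) /= inordK ?ltnS.
- by rewrite (tnth_nth 0) /= inordK ?ltnS.
Qed.

Lemma Qm n : Q n -> m_friendly L n.+1.
Proof.
move=> H l /imsetP [g0 g0Z ->] i.
apply/setP => x; rewrite inE; apply/imsetP/eqP.
- case=> g; rewrite inE => /andP [_ /eqP <-] ->.
  by rewrite tnth_map.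
- rewrite tnth_map (tnth_nth 0) => hx.
  move: g0Z; rewrite ZmE => /eqP hs.
  have [h [h1 h2 h3]] := H _ hs i (ltn_ord i) x hx.
  exists [tuple h (val j) | j < n.+1]; last by rewrite tnth_map tnth_ord_tuple.
  rewrite inE ZmE; apply/andP; split.
    apply/eqP; rewrite nth_mkt // -h1.
    apply: eq_bigr => j _.
    by rewrite nth_mkt // leqW.
  apply/eqP; apply: eq_from_tnth => j.
  by rewrite !tnth_map tnth_ord_tuple [in RHS](tnth_nth 0) /= h2 // -ltnS.
Qed.

Lemma Qstep n : (2 <= n)%N -> Q 2 -> Q n -> Q n.+1.
Proof.
move=> n2 H2 Hn f hf i hi x hx.
pose s := \sum_(j < n) f j.
pose f' := fun j => if j == n then s else f j.
have f'sum : \sum_(j < n) f' j = f' n.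
  rewrite /f' eqxx; apply: eq_bigr => j _.
  by rewrite ifF // ltn_eqF.
pose t := fun j => if j == 0%N then s else if j == 1%N then f n else f n.+1.
have tsum : \sum_(j < 2) t j = t 2%N.
  by rewrite !big_ord_recr big_ord0 /= add0r /t /= -hf big_ord_recr.
have comb : forall h k : nat -> G,
  \sum_(j < n) h j = h n -> (forall j, (j <= n)%N -> L (h j) = L (f' j)) ->
  \sum_(j < 2) k j = k 2%N -> (forall j, (j <= 2)%N -> L (k j) = L (t j)) ->
  k 0%N = h n ->
  exists hh : nat -> G, [/\ \sum_(j < n.+1) hh j = hh n.+1,
     (forall j, (j <= n.+1)%N -> L (hh j) = L (f j)) &
     (forall j, (j < n)%N -> hh j = h j) /\ hh n = k 1%N /\ hh n.+1 = k 2%N].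
  move=> h k h1 h2 k1 k2 k0.
  have e1 : (n.+1 < n)%N = false by rewrite ltnNge leqnSn.
  have e2 : (n.+1 == n) = false by rewrite gtn_eqF.
  exists (fun j => if (j < n)%N then h j else if j == n then k 1%N else k 2%N).
  split.
  - rewrite big_ord_recr /= ltnn eqxx e1 e2.
    rewrite -k1 !big_ord_recr big_ord0 /= add0r k0 -h1.
    congr (_ + _); apply: eq_bigr => j _; by rewrite ltn_ord.
  - move=> j hj; case: (ltnP j n) => hjn.
      rewrite h2; last exact: ltnW.
      by rewrite /f' (ltn_eqF hjn).
    case: (eqVneq j n) => [->|hne].
      by rewrite (k2 1%N) // /t.
    have -> : j = n.+1.
      by apply/eqP; rewrite eqn_leq hj ltn_neqAle eq_sym hne hjn.
    by rewrite (k2 2%N) // /t.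
  - split; first by move=> j ->.
    by rewrite ltnn eqxx e1 e2.
case: (ltnP i n) => hin.
- have hx' : L x = L (f' i) by rewrite /f' (ltn_eqF hin).
  have [h [h1 h2 h3]] := Hn f' f'sum i (ltnW hin) x hx'.
  have hn : L (h n) = L (t 0%N) by rewrite h2 // /f' /t eqxx.
  have [k [k1 k2 k3]] := H2 t tsum 0%N isT (h n) hn.
  have [hh [hh1 hh2 [hh3 _]]] := comb h k h1 h2 k1 k2 k3.
  by exists hh; split => //; rewrite hh3.
- case: (eqVneq i n) => [ein|hne].
  subst i.
  have hx' : L x = L (t 1%N) by rewrite /t.
  have [k [k1 k2 k3]] := H2 t tsum 1%N isT x hx'.
  have hk0 : L (k 0%N) = L (f' n) by rewrite (k2 0%N) // /f' /t /= eqxx.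
  have [h [h1 h2 h3]] := Hn f' f'sum n (leqnn n) (k 0%N) hk0.
  have [hh [hh1 hh2 [_ [hh4 hh5]]]] := comb h k h1 h2 k1 k2 (esym h3).
  by exists hh; split => //; rewrite hh4 k3.
  have ein : i = n.+1.
    by apply/eqP; rewrite eqn_leq hi ltn_neqAle eq_sym hne hin.
  subst i.
  have hx' : L x = L (t 2%N) by rewrite /t.
  have [k [k1 k2 k3]] := H2 t tsum 2%N isT x hx'.
  have hk0 : L (k 0%N) = L (f' n) by rewrite (k2 0%N) // /f' /t /= eqxx.
  have [h [h1 h2 h3]] := Hn f' f'sum n (leqnn n) (k 0%N) hk0.
  have [hh [hh1 hh2 [_ [hh4 hh5]]]] := comb h k h1 h2 k1 k2 (esym h3).
  by exists hh; split => //; rewrite hh5 k3.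
Qed.


End S.

Theorem lemma3p5 (G : finZmodType) (Lab : finType) (L : G -> Lab) :
  m_friendly L 3 -> friendly L.
Proof.
move=> H3 m hm.
have Q2' := @Q2 G Lab L H3.
have QQ : forall k, Q G Lab L k.+2.
  elim=> // k IH; exact: (@Qstep G Lab L k.+2).
case: m hm => [|[|[|k]]] // _.
exact: (@Qm G Lab L k.+2 (QQ k)).
Qed.
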